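(* Let $R$ be a ring and $M$, $N$ left $R$-modules with $\operatorname{char}(M)=a$ and $\operatorname{char}(N)=b$. (1) If $a$ and $b$ are positive and coprime, then $\operatorname{Ext}^1_R(N,M)=0$. (2) If $M$ is simple and $a=0\neq b$, then $\operatorname{Ext}^1_R(N,M)=0$. (3) If $M$ and $N$ are simple and $a\neq 0=b$, then $\operatorname{Ext}^1_R(N,M)=0$.
   Context: For an $R$-module $M$, the characteristic $\operatorname{char}(M)$ is defined to be the characteristic of the ring $\operatorname{End}_R(M)$. *)

(* Defs.v *)
From HB Require Import structures.
From mathcomp Require Import all_boot all_order all_algebra.
Set Implicit Arguments. Unset Strict Implicit. Unset Printing Implicit Defensive.
Import GRing.Theory.
Local Open Scope ring_scope.

(* Characteristic of a module M: the characteristic of the ring End_R(M).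
   In End_R(M), n%:R is the endomorphism x |-> x *+ n, so the characteristic
   is the natural number a with:  n%:R = 0 in End_R(M)  <->  a %| n. *)
Definition mod_char (R : pzRingType) (M : lmodType R) (a : nat) : Prop :=
  forall n : nat, (forall x : M, x *+ n = 0) <-> (a %| n)%N.

Definition submodule (R : pzRingType) (M : lmodType R) (S : M -> Prop) : Prop :=
  S 0 /\ (forall x y, S x -> S y -> S (x + y)) /\ (forall (r : R) x, S x -> S (r *: x)).

Definition simple_mod (R : pzRingType) (M : lmodType R) : Prop :=
  (exists x : M, x != 0) /\
  forall S : M -> Prop, submodule S -> (forall x, S x -> x = 0) \/ (forall x, S x).

(* Ext^1_R(N, M) = 0 (Yoneda description): every short exact sequence of
   left R-modules  0 -> M -f-> E -g-> N -> 0  splits. *)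
Definition ext1_zero (R : pzRingType) (N M : lmodType R) : Prop :=
  forall (E : lmodType R) (f : {linear M -> E}) (g : {linear E -> N}),
    injective f ->
    (forall y : N, exists e : E, g e = y) ->
    (forall e : E, g e = 0 <-> exists m : M, f m = e) ->
    exists s : {linear N -> E}, forall y : N, g (s y) = y.

(* Main.v *)
Require Import Defs.
From HB Require Import structures.
From mathcomp Require Import all_boot all_order all_algebra.
Import GRing.Theory.
Local Open Scope ring_scope.

Lemma split_lemma (R : pzRingType) (N E : lmodType R) (g : {linear E -> N}) (t : E -> E)
  (tB : forall x y, t (x - y) = t x - t y) (tZ : forall r x, t (r *: x) = r *: t x)
  (surj : forall y, exists e, g (t e) = y) (inj : forall e, g (t e) = 0 -> t e = 0) :
  exists s : {linear N -> E}, forall y, g (s y) = y.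
Proof.
have surj' : forall y, exists e, g (t e) == y by move=> y; have [e <-] := surj y; exists e.
pose s y := t (xchoose (surj' y)).
have gs y : g (s y) = y by apply/eqP; exact: (xchooseP (surj' y)).
have t0 : t 0 = 0 by have := tB 0 0; rewrite subrr => ->; rewrite subrr.
have tN x : t (- x) = - t x by rewrite -sub0r tB t0 sub0r.
have tD x y : t (x + y) = t x + t y by have := tB x (- y); rewrite opprK tN opprK.
have Hlin : linear s.
  move=> r u v.
  set e1 := xchoose (surj' u); set e2 := xchoose (surj' v).
  set e3 := xchoose (surj' (r *: u + v)).
  have : t (e3 - (r *: e1 + e2)) = 0.
    apply: inj; rewrite tB tD tZ linearB /= linearD /= linearZ /=.
    by rewrite -!/(s _) !gs subrr.
  by rewrite tB tD tZ => /eqP; rewrite subr_eq0 => /eqP.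
by exists (HB.pack_for {linear N -> E} s (GRing.isLinear.Build R N E *:%R s Hlin)).
Qed.

Lemma char0_bij (R : pzRingType) (M : lmodType R) (b : nat) :
  mod_char M 0 -> simple_mod M -> b <> 0%N ->
  (forall x y : M, x *+ b = y *+ b -> x = y) /\ (forall x : M, exists y, y *+ b = x).
Proof.
move=> ch [[x0 nx0] sim] b0.
have inj : forall x y : M, x *+ b = y *+ b -> x = y.
  have sub1 : submodule (fun x : M => x *+ b = 0).
    split; first by rewrite /= mul0rn.
    split; first by move=> x y /= hx hy; rewrite mulrnDl hx hy addr0.
    by move=> r x /= hx; rewrite scalerMnr hx scaler0.
  have [K|K] := sim _ sub1.
  - by move=> x y /eqP; rewrite -subr_eq0 -mulrnBl => /eqP /K /eqP; rewrite subr_eq0 => /eqP.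
  - have := (ch b).1 K; rewrite dvd0n => /eqP; done.
split=> //.
have sub2 : submodule (fun x : M => exists y, y *+ b = x).
  split; first by exists 0; rewrite /= mul0rn.
  split; first by move=> x y /= [x1 <-] [y1 <-]; exists (x1 + y1); rewrite mulrnDl.
  by move=> r x /= [x1 <-]; exists (r *: x1); rewrite scalerMnr.
have [K|K] := sim _ sub2.
- exfalso; have /K h : exists y, y *+ b = x0 *+ b by exists x0.
  by move: nx0; rewrite (inj x0 0) ?eqxx // h mul0rn.
- exact: K.
Qed.

Theorem mainTheorem4 (R : pzRingType) (M N : lmodType R) (a b : nat) :
  mod_char M a -> mod_char N b ->
  ((0 < a)%N -> (0 < b)%N -> coprime a b -> ext1_zero N M) /\
  (simple_mod M -> a = 0%N -> b <> 0%N -> ext1_zero N M) /\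
  (simple_mod M -> simple_mod N -> a <> 0%N -> b = 0%N -> ext1_zero N M).
Proof.
move=> chM chN; split; last split.
- move=> a0 b0 cop E f g finj gs ex.
  have [km kn def _] := egcdnP b a0.
  move: cop; rewrite /coprime => /eqP cop; rewrite cop in def.
  have gfm m : g (f m) = 0 by apply/(ex _).2; exists m.
  have gt e : g (e *+ (km * a)) = g e.
    by rewrite raddfMn /= def mulrnDr mulnC mulrnA ((chN b).2 (dvdnn b)) mul0rn add0r.
  apply: (@split_lemma _ _ _ g (fun e => e *+ (km * a))).
  + by move=> x y; rewrite mulrnBl.
  + by move=> r x; rewrite scalerMnr.
  + move=> y; have [e <-] := gs y; exists e; exact: gt.
  + move=> e; rewrite gt => /(ex _).1 [m <-]; rewrite -raddfMn /= (chM _).2 ?raddf0 //.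
    by rewrite dvdn_mull.
- move=> sM a0 b0 E f g finj gs ex; subst a.
  have [minj msurj] := @char0_bij _ _ _ chM sM b0.
  have gfm m : g (f m) = 0 by apply/(ex _).2; exists m.
  have exm e : exists m, f (m *+ b) == e *+ b.
    have : g (e *+ b) = 0 by rewrite raddfMn /= ((chN b).2 (dvdnn b)).
    move=> /(ex _).1 [m0 fm0]; have [m hm] := msurj m0.
    by exists m; rewrite hm fm0.
  pose p e := xchoose (exm e).
  have hp e : f (p e *+ b) = e *+ b by apply/eqP; exact: (xchooseP (exm e)).
  have uniq m e : f (m *+ b) = e *+ b -> p e = m.
    by move=> h; apply: minj; apply: finj; rewrite hp h.
  have pfm m : p (f m) = m by apply: uniq; rewrite raddfMn.
  apply: (@split_lemma _ _ _ g (fun e => e - f (p e))).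
  + move=> x y; have -> : p (x - y) = p x - p y.
      by apply: uniq; rewrite mulrnBl raddfB /= !hp mulrnBl.
    rewrite raddfB /=; set u := f (p x); set v := f (p y).
    by rewrite !opprB !addrA [x - y + v]addrAC [x - u + v]addrAC [RHS]addrAC.
  + move=> r x; have -> : p (r *: x) = r *: p x.
      by apply: uniq; rewrite scalerMnr linearZ /= hp -scalerMnr.
    by rewrite linearZ /= scalerBr.
  + move=> y; have [e <-] := gs y; exists e.
    by rewrite raddfB /= gfm subr0.
  + move=> e; rewrite raddfB /= gfm subr0 => /(ex _).1 [m <-].
    by rewrite pfm subrr.
- move=> sM sN a0 b0 E f g finj gs ex; subst b.
  have [ninj nsurj] := @char0_bij _ _ _ chN sN a0.
  have gfm m : g (f m) = 0 by apply/(ex _).2; exists m.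
  apply: (@split_lemma _ _ _ g (fun e => e *+ a)).
  + by move=> x y; rewrite mulrnBl.
  + by move=> r x; rewrite scalerMnr.
  + move=> y; have [y' <-] := nsurj y; have [e <-] := gs y'; exists e.
    by rewrite raddfMn.
  + move=> e; rewrite raddfMn /= => h.
    have : g e = 0 by apply: ninj; rewrite h mul0rn.
    move=> /(ex _).1 [m <-]; rewrite -raddfMn /= (chM _).2 ?raddf0 //.
Qed.
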